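(* For every multiway system $M=(R,s,\Sigma)$ there is a multiway system $M'=(R',s',\{a,b\})$, where $a,b$ are two distinct symbols, such that the states graphs of $M$ and $M'$ are isomorphic.
   Context: A (string-based) multiway system is a triple $(R,s,\Sigma)$ with $\Sigma$ a finite alphabet, $R$ a finite set of string replacement rules $r\to t$ with $r,t\in\Sigma^*$, and initial string $s\in\Sigma^*$. Its states graph is the directed graph whose vertices are the strings reachable from $s$ by repeated rule application, with an edge $u\to v$ whenever $v$ arises from $u$ by replacing one occurrence of some rule's left side $r$ in $u$ by the corresponding right side $t$. *)

(* Defs.v *)
From mathcomp Require Import all_boot.
Set Implicit Arguments. Unset Strict Implicit. Unset Printing Implicit Defensive.

Record multiway (Sigma : finType) := Multiway {
  mw_rules : seq (seq Sigma * seq Sigma);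
  mw_init  : seq Sigma }.

Definition mw_step (Sigma : finType) (M : multiway Sigma) (u v : seq Sigma) : Prop :=
  exists r t x y, (r, t) \in mw_rules M /\ u = x ++ r ++ y /\ v = x ++ t ++ y.

(* Strings reachable from the initial string by repeated rule application
   (zero or more steps): the vertices of the states graph. *)
Inductive mw_reachable (Sigma : finType) (M : multiway Sigma) : seq Sigma -> Prop :=
| mw_reach_init : mw_reachable M (mw_init M)
| mw_reach_step u v : mw_reachable M u -> mw_step M u v -> mw_reachable M v.

Definition states_graph_iso (S1 S2 : finType) (M1 : multiway S1) (M2 : multiway S2) : Prop :=
  exists (f : seq S1 -> seq S2) (g : seq S2 -> seq S1),
    (forall u, mw_reachable M1 u -> mw_reachable M2 (f u) /\ g (f u) = u) /\
    (forall w, mw_reachable M2 w -> mw_reachable M1 (g w) /\ f (g w) = w) /\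
    (forall u v, mw_reachable M1 u -> mw_reachable M1 v ->
       (mw_step M1 u v <-> mw_step M2 (f u) (f v))).

(* Main.v *)
Require Import Defs.
From mathcomp Require Import all_boot.
Set Implicit Arguments. Unset Strict Implicit.

Section Enc.
Variable Sigma : finType.

Definition code (s : Sigma) : seq bool := nseq (pickle s) false ++ [:: true].
Definition cd (u : seq Sigma) : seq bool := flatten (map code u).
Definition enc (u : seq Sigma) : seq bool := true :: cd u.

Fixpoint decb (k : nat) (w : seq bool) : seq Sigma :=
  match w with
  | [::] => [::]
  | false :: w' => decb k.+1 w'
  | true :: w' => match (unpickle k : option Sigma) with
                  | Some x => x :: decb 0 w'
                  | None => decb 0 w' end
  end.
Definition dec (w : seq bool) := decb 0 (behead w).

Lemma decb_nseq k n A : decb k (nseq n false ++ A) = decb (k + n) A.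
Proof. elim: n k => [|n IH] k /=; first by rewrite addn0. by rewrite IH addnS. Qed.

Lemma decK : cancel enc dec.
Proof.
rewrite /dec /enc /= /cd; elim=> [|s u IH] //=.
by rewrite /code -catA decb_nseq add0n /= pickleK IH.
Qed.

Lemma enc_inj : injective enc.
Proof. exact: can_inj decK. Qed.

Lemma cd_cat u v : cd (u ++ v) = cd u ++ cd v.
Proof. by rewrite /cd map_cat flatten_cat. Qed.

Lemma last_cd x : last true (cd x) = true.
Proof.
elim: x => [|s x IH] //=. rewrite last_cat.
rewrite /code cats1 last_rcons.
exact IH.
Qed.

Lemma block a b A B : nseq a false ++ true :: A = nseq b false ++ true :: B ->
  a = b /\ A = B.
Proof.
elim: a b => [|a IH] [|b] //=; first by case.
by case=> /IH [-> ->].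
Qed.

Lemma splitT j A X B : nseq j false ++ true :: A = X ++ true :: B ->
  (X = nseq j false /\ A = B) \/
  (exists X2, X = nseq j false ++ true :: X2 /\ A = X2 ++ true :: B).
Proof.
elim: j X => [|j IH] [|x X] //=.
- by case=> ->; left.
- by case=> -> ->; right; exists X.
- case=> <- /IH [[-> ->]|[X2 [-> ->]]]; [by left|by right; exists X2].
Qed.

Lemma prefix r u Y : cd u = cd r ++ Y -> exists y, u = r ++ y /\ Y = cd y.
Proof.
elim: r u => [|s r IH] u; first by move=> e; exists u.
case: u => [|t u]; first by rewrite /cd /= /code; case: (pickle s).
rewrite /cd /= /code -!catA /= => /block [/(pcan_inj pickleK) -> /IH [y [-> ->]]].
by exists y.
Qed.

Lemma matching u X Y r : enc u = X ++ enc r ++ Y ->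
  exists x y, u = x ++ r ++ y /\ rcons X true = enc x /\ Y = cd y.
Proof.
elim: u X => [|t u IH] [|b X] /=.
- rewrite /enc /cd; case: r => [|s r] /=.
    by case: Y => // _; exists [::], [::].
  by rewrite /code; case: (pickle s).
- by rewrite /enc => -[_]; case: X.
- rewrite /enc; case=> /prefix [y [-> ->]]; by exists [::], y.
- rewrite /enc /cd /= -/(cd u); case=> <-; rewrite /code -catA /= => /splitT [[-> /prefix [y [-> ->]]]|].
    exists [:: t], y; split => //; split => //.
    by rewrite /= cats0 cats1.
  case=> X2 [-> e].
  have /IH [x [y [-> [ex ->]]]] : enc u = (true :: X2) ++ enc r ++ Y by rewrite /enc e.
  exists (t :: x), y; split => //; split => //.
  move: ex; rewrite /enc /cd /= => -[ex].
  by rewrite rcons_cat /= ex -catA.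
Qed.

Definition encM (M : multiway Sigma) : multiway bool :=
  Multiway [seq (enc rt.1, enc rt.2) | rt <- mw_rules M] (enc (mw_init M)).

Lemma step_back M u w : mw_step (encM M) (enc u) w ->
  exists v, w = enc v /\ mw_step M u v.
Proof.
move=> [R [T [X [Y [/mapP [[r t] rin [-> ->]] [eu ->]]]]]].
have [x [y [-> [ex ->]]]] := matching eu.
exists (x ++ t ++ y); split; last by exists r, t, x, y.
by rewrite -cat_rcons ex /enc /= !cd_cat.
Qed.

Lemma step_fwd M u v : mw_step M u v -> mw_step (encM M) (enc u) (enc v).
Proof.
move=> [r [t [x [y [rin [-> ->]]]]]].
exists (enc r), (enc t), (belast true (cd x)), (cd y).
have E : rcons (belast true (cd x)) true = enc x.
  by rewrite /enc lastI last_cd.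
split; first by apply/mapP; exists (r, t).
split; last by rewrite /enc !cd_cat -cat_rcons E.
by rewrite /enc !cd_cat -cat_rcons E.
Qed.

End Enc.

Theorem lemma4 (Sigma : finType) (M : multiway Sigma) :
  exists M' : multiway bool, states_graph_iso M M'.
Proof.
exists (@encM Sigma M), (@enc Sigma), (@dec Sigma).
have back : forall w, mw_reachable (@encM Sigma M) w ->
    exists u, mw_reachable M u /\ w = enc u.
  move=> w; elim=> [|w1 w2 _ [u [ru ->]] /step_back [v [-> st]]].
    by exists (mw_init M); split => //; constructor.
  by exists v; split => //; apply: mw_reach_step st.
split; last split.
- move=> u; elim=> [|u1 u2 _ [IH _] st]; split; rewrite ?decK //.
    by constructor.
  exact: mw_reach_step IH (step_fwd st).
- by move=> w /back [u [ru ->]]; rewrite decK.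
- move=> u v _ _; split; first exact: step_fwd.
  by move/step_back=> [v' [/enc_inj -> st]].
Qed.
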